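(* Let $\mu,\nu\in P_2^r(\mathbb{R}^d)$ and let $r$ be the unique optimal transport map for the 2-Wasserstein distance with $r_\#\mu=\nu$. Let $N\subset\mathbb{R}^d$ be a $\mu$-negligible set such that $\langle r(x_1)-r(x_2),x_1-x_2\rangle>0$ for all distinct $x_1,x_2\in\mathbb{R}^d\setminus N$. For $t\in[0,1]$ let $h_t(x)=(1-t)x+tr(x)$ and $\mu_t=(h_t)_\#\mu$. If $r$ is continuous and $\operatorname{supp}(\mu)\setminus N$ contains a nonempty open set, then every geodesic measure $\mu_t$, $t\in[0,1]$, is a probabilistic frame.
   Context: $P_2^r(\mathbb{R}^d)$ denotes the set of probability measures on $\mathbb{R}^d$ with finite second moment that are absolutely continuous with respect to Lebesgue measure. The optimal transport map $r$ is the map with $r_\#\mu=\nu$ minimizing $\int\|x-r(x)\|^2d\mu(x)$; such an $r$ exists, is unique $\mu$-a.e., and a $\mu$-negligible set $N$ as described exists. A probabilistic frame is a probability measure on $\mathbb{R}^d$ with finite second moment whose support spans $\mathbb{R}^d$. $\operatorname{supp}(\mu)$ is the set of points all of whose open neighborhoods have positive $\mu$-measure. *)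

(* Defs.v *)
From HB Require Import structures.
From mathcomp Require Import all_boot all_order all_algebra.
From mathcomp Require Import all_classical all_reals all_analysis.
Set Implicit Arguments. Unset Strict Implicit. Unset Printing Implicit Defensive.
Import Order.TTheory GRing.Theory Num.Theory.
Import numFieldNormedType.Exports.
Local Open Scope classical_set_scope.
Local Open Scope ring_scope.

(* R^d, represented by row vectors, with its usual (product/normed) topology
   and the Borel sigma-algebra generated by its open sets. *)
Definition Rd (R : realType) (d : nat) : Type :=
  g_sigma_algebraType (@open 'rV[R]_d).

Definition dotv (R : realType) (d : nat) (x y : 'rV[R]_d) : R :=
  \sum_(i < d) x ord0 i * y ord0 i.
Definition sqnorm (R : realType) (d : nat) (x : 'rV[R]_d) : R := dotv x x.

Definition box_vol (R : realType) (d : nat) (a b : 'rV[R]_d) : R :=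
  \prod_(i < d) (b ord0 i - a ord0 i).
Definition in_box (R : realType) (d : nat) (a b x : 'rV[R]_d) : Prop :=
  forall i : 'I_d, a ord0 i <= x ord0 i <= b ord0 i.
Definition lebesgue_null (R : realType) (d : nat) (A : set 'rV[R]_d) : Prop :=
  forall eps : R, 0 < eps ->
  exists (a b : nat -> 'rV[R]_d),
    (forall k, forall i : 'I_d, a k ord0 i <= b k ord0 i) /\
    (A `<=` \bigcup_k [set x | in_box (a k) (b k) x]) /\
    (\sum_(0 <= k <oo) (box_vol (a k) (b k))%:E <= eps%:E)%E.

Definition abs_cont (R : realType) (d : nat) (mu : set (Rd R d) -> \bar R) : Prop :=
  forall A : set (Rd R d), measurable A -> lebesgue_null A -> mu A = 0%E.

Definition finite_second_moment (R : realType) (d : nat)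
  (mu : {measure set (Rd R d) -> \bar R}) : Prop :=
  (\int[mu]_x (sqnorm (x : 'rV[R]_d))%:E < +oo)%E.

Definition P2r (R : realType) (d : nat) (mu : probability (Rd R d) R) : Prop :=
  abs_cont mu /\ finite_second_moment mu.

Definition pushes (R : realType) (d : nat) (T : Rd R d -> Rd R d)
  (mu nu : set (Rd R d) -> \bar R) : Prop :=
  measurable_fun [set: Rd R d] T /\
  forall A : set (Rd R d), measurable A -> nu A = mu (T @^-1` A).

Definition optimal_map (R : realType) (d : nat) (mu nu : probability (Rd R d) R)
  (r : Rd R d -> Rd R d) : Prop :=
  pushes r mu nu /\
  forall s : Rd R d -> Rd R d, pushes s mu nu ->
    (\int[mu]_x (sqnorm ((x : 'rV[R]_d) - r x))%:E
     <= \int[mu]_x (sqnorm ((x : 'rV[R]_d) - s x))%:E)%E.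

Definition msupp (R : realType) (d : nat) (mu : set (Rd R d) -> \bar R)
  : set 'rV[R]_d :=
  [set x | forall U : set 'rV[R]_d, open U -> U x -> (0 < mu U)%E].

Definition spans (R : realType) (d : nat) (S : set 'rV[R]_d) : Prop :=
  forall y : 'rV[R]_d, exists (n : nat) (c : 'I_n -> R) (v : 'I_n -> 'rV[R]_d),
    (forall i, S (v i)) /\ y = \sum_(i < n) c i *: v i.

Definition prob_frame (R : realType) (d : nat) (mu : probability (Rd R d) R) : Prop :=
  finite_second_moment mu /\ spans (msupp mu).

Definition interp (R : realType) (d : nat) (r : 'rV[R]_d -> 'rV[R]_d) (t : R)
  (x : 'rV[R]_d) : 'rV[R]_d := (1 - t) *: x + t *: r x.

(* Main.v *)
Require Import Defs.
From HB Require Import structures.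
From mathcomp Require Import all_boot all_order all_algebra.
From mathcomp Require Import all_classical all_reals all_analysis.
From mathcomp Require Import ring lra measurable_realfun.
Import Order.TTheory GRing.Theory Num.Theory.
Import numFieldNormedType.Exports.
Local Open Scope classical_set_scope.
Local Open Scope ring_scope.

Lemma meas_cont_rV (R : realType) d (f : 'rV[R]_d -> 'rV[R]_d) :
  continuous f -> measurable_fun [set: Rd R d] (f : Rd R d -> Rd R d).
Proof.
move=> /continuousP cf.
have := @measurability _ _ (Rd R d) (Rd R d) setT f (@open 'rV[R]_d).
move=> H; apply: H => //.
move=> _ [B oB <-]; rewrite setTI; apply: sub_gen_smallest; exact: cf.
Qed.

Lemma meas_cont_R (R : realType) d (f : 'rV[R]_d -> R) :
  continuous f -> measurable_fun [set: Rd R d] (f : Rd R d -> R).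
Proof.
move=> /continuousP cf.
have := @measurability _ _ (Rd R d) R setT f (R.-ocitv.-measurable).
move=> H; apply: H => //.
move=> _ [B [[a b] _ <-] <-]; rewrite setTI /=.
have oo c : measurable (f @^-1` `]c, +oo[ : set (Rd R d)).
  apply: sub_gen_smallest; apply: cf; exact: interval_open.
rewrite (_ : _ @^-1` _ = (f @^-1` `]a, +oo[) `&` ~` (f @^-1` `]b, +oo[)).
  by apply: measurableI => //; apply: measurableC.
apply/seteqP; split => x /=; rewrite !in_itv /= !andbT.
    by move=> /andP[-> H]; split => //; rewrite ltNge H.
by move=> [-> H]; rewrite leNgt; apply/negP.
Qed.

Lemma dotvDl (R : realType) d (a b c : 'rV[R]_d) : dotv (a + b) c = dotv a c + dotv b c.
Proof. by rewrite /dotv -big_split; apply: eq_bigr => i _; rewrite mxE mulrDl. Qed.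
Lemma dotvNl (R : realType) d (a c : 'rV[R]_d) : dotv (- a) c = - dotv a c.
Proof. by rewrite /dotv -sumrN; apply: eq_bigr => i _; rewrite mxE mulNr. Qed.
Lemma dotvBl (R : realType) d (a b c : 'rV[R]_d) : dotv (a - b) c = dotv a c - dotv b c.
Proof. by rewrite dotvDl dotvNl. Qed.
Lemma dotvZl (R : realType) d k (a c : 'rV[R]_d) : dotv (k *: a) c = k * dotv a c.
Proof. by rewrite /dotv mulr_sumr; apply: eq_bigr => i _; rewrite mxE mulrA. Qed.
Lemma dotvZr (R : realType) d k (a c : 'rV[R]_d) : dotv a (k *: c) = k * dotv a c.
Proof. by rewrite /dotv mulr_sumr; apply: eq_bigr => i _; rewrite mxE mulrCA. Qed.
Lemma dotv_ge0 (R : realType) d (a : 'rV[R]_d) : 0 <= dotv a a.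
Proof. by apply: sumr_ge0 => i _; rewrite -expr2 sqr_ge0. Qed.
Lemma dotv_gt0 (R : realType) d (a : 'rV[R]_d) : a != 0 -> 0 < dotv a a.
Proof.
move=> a0; have [i ai] : exists i, a ord0 i != 0.
  apply: contrapT => H; move/negP: a0; apply; apply/eqP/rowP => i.
  rewrite mxE; apply/eqP; apply: contrapT => /negP Hi; apply: H; by exists i.
rewrite /dotv (bigD1 i) //= ltr_pwDl //; first by rewrite -expr2 exprn_even_gt0.
by apply: sumr_ge0 => j _; rewrite -expr2 sqr_ge0.
Qed.

Lemma interp_cont (R : realType) d (r : 'rV[R]_d -> 'rV[R]_d) t :
  continuous r -> continuous (interp r t).
Proof.
move=> cr x; apply: continuousD.
  by apply: continuousZl_tmp; exact: cvg_id.
by apply: continuousZl_tmp; exact: cr.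
Qed.

Lemma interp_mono (R : realType) d (r : 'rV[R]_d -> 'rV[R]_d) t x1 x2 :
  0 <= t <= 1 -> x1 != x2 -> 0 < dotv (r x1 - r x2) (x1 - x2) ->
  0 < dotv (interp r t x1 - interp r t x2) (x1 - x2).
Proof.
move=> /andP[t0 t1] x12 rpos.
have -> : interp r t x1 - interp r t x2 = (1 - t) *: (x1 - x2) + t *: (r x1 - r x2).
  by rewrite /interp !scalerBr; rewrite addrACA opprD.
rewrite dotvDl !dotvZl.
have a0 : 0 < dotv (x1 - x2) (x1 - x2) by apply: dotv_gt0; rewrite subr_eq0.
case: (ltrP t 1) => ht.
  have h1 : 0 < (1 - t) * dotv (x1 - x2) (x1 - x2) by apply: mulr_gt0 => //; rewrite subr_gt0.
  have h2 := mulr_ge0 t0 (ltW rpos).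
  by rewrite ltr_wpDr.
have -> : t = 1 by apply/eqP; rewrite eq_le t1 ht.
by rewrite subrr mul0r add0r mul1r.
Qed.

Lemma msqnorm (R : realType) d : measurable_fun [set: Rd R d] (@sqnorm R d : Rd R d -> R).
Proof.
rewrite /sqnorm /dotv; apply: measurable_sum => i.
by apply: measurable_funM; apply: meas_cont_R; exact: coord_continuous.
Qed.

Lemma sqnorm_convex (R : realType) d (t : R) (x y : 'rV[R]_d) : 0 <= t <= 1 ->
  sqnorm ((1 - t) *: x + t *: y) <= (1 - t) * sqnorm x + t * sqnorm y.
Proof.
move=> /andP[t0 t1]; rewrite /sqnorm /dotv !mulr_sumr -big_split /=.
apply: ler_sum => i _; rewrite !mxE.
set a := x ord0 i; set b := y ord0 i.
have h : 0 <= t * (1 - t) * ((a - b) * (a - b)).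
  by apply: mulr_ge0; [apply: mulr_ge0 => //; rewrite subr_ge0|rewrite -expr2 sqr_ge0].
suff E : (1 - t) * (a * a) + t * (b * b) - ((1 - t) * a + t * b) * ((1 - t) * a + t * b)
   = t * (1 - t) * ((a - b) * (a - b)).
  by rewrite -subr_ge0 E.
by ring.
Qed.

Lemma interp_meas (R : realType) d (r : Rd R d -> Rd R d) t :
  continuous (r : 'rV[R]_d -> 'rV[R]_d) ->
  measurable_fun [set: Rd R d] (interp r t : Rd R d -> Rd R d).
Proof. by move=> cr; apply: meas_cont_rV; exact: interp_cont. Qed.

Lemma smom (R : realType) d (mu nu : probability (Rd R d) R) (r : Rd R d -> Rd R d) t
  (mh : measurable_fun [set: Rd R d] (interp r t : Rd R d -> Rd R d)) :
  0 <= t <= 1 ->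
  finite_second_moment mu -> finite_second_moment nu -> pushes r mu nu ->
  finite_second_moment (distribution mu (mfun_Sub (mem_set mh))).
Proof.
move=> t01 fmu fnu [mr rnu].
have t0 : 0 <= t by case/andP: t01.
have t1 : 0 <= 1 - t by case/andP: t01 => _ ?; rewrite subr_ge0.
have msq := @msqnorm R d.
have msqE : measurable_fun [set: Rd R d] (fun x : Rd R d => (sqnorm (x : 'rV[R]_d))%:E).
  exact/measurable_EFinP.
have msqr : measurable_fun [set: Rd R d] (fun x : Rd R d => (sqnorm (r x : 'rV[R]_d))%:E).
  by apply/measurable_EFinP; exact: measurableT_comp msq mr.
rewrite /finite_second_moment ge0_integral_distribution //=; last first.
  by move=> y; rewrite lee_fin dotv_ge0.
apply: (@le_lt_trans _ _ (\int[mu]_x ((1 - t)%:E * (sqnorm (x : 'rV[R]_d))%:E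
                          + t%:E * (sqnorm (r x : 'rV[R]_d))%:E))%E).
  apply: ge0_le_integral => //.
  - by move=> x _; rewrite lee_fin dotv_ge0.
  - apply/measurable_EFinP; apply: measurableT_comp msq _.
    exact: mh.
  - apply: emeasurable_funD; apply: emeasurable_funM => //; exact: measurable_cst.
  - move=> x _; rewrite /=.
    rewrite -!EFinM -EFinD lee_fin; exact: sqnorm_convex.
rewrite ge0_integralD //; last 4 first.
- by move=> x _; rewrite mule_ge0 // lee_fin dotv_ge0.
- apply: emeasurable_funM => //; exact: measurable_cst.
- by move=> x _; rewrite mule_ge0 // lee_fin dotv_ge0.
- apply: emeasurable_funM => //; exact: measurable_cst.
rewrite ge0_integralZl_EFin //; last by move=> x _; rewrite lee_fin dotv_ge0.
rewrite ge0_integralZl_EFin //; last by move=> x _; rewrite lee_fin dotv_ge0.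
have -> : (\int[mu]_x (sqnorm (r x : 'rV[R]_d))%:E = \int[nu]_x (sqnorm (x : 'rV[R]_d))%:E)%E.
  rewrite [RHS](eq_measure_integral (pushforward mu r)); last first.
    by move=> A mA _; exact: rnu.
  rewrite (ge0_integral_pushforward mr) //; last by move=> y _; rewrite lee_fin dotv_ge0.
apply: lte_add_pinfty; apply: lte_mul_pinfty => //; by rewrite lee_fin.
Qed.

Lemma span_of (R : realType) d (V : set 'rV[R]_d) :
  (forall w : 'rV[R]_d, w != 0 -> exists v, V v /\ dotv v w != 0) -> spans V.
Proof.
move=> HV.
have step : forall k, (k <= d)%N -> exists n (A : 'M[R]_(n, d)),
    (forall i, V (row i A)) /\ (k <= \rank A)%N.
  elim=> [_|k IH Hk].
    by exists 0%N, 0; split => // -[].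
  have [n [A [VA kA]]] := IH (ltnW Hk).
  case: (leqP k.+1 (\rank A)) => [|rA]; first by exists n, A.
  have eA : \rank A = k by apply/eqP; rewrite eqn_leq kA -ltnS rA.
  have [v [Vv nvA]] : exists v, V v /\ ~~ (v <= A)%MS.
    apply: contrapT => Hall.
    have allA : forall v, V v -> (v <= A)%MS.
      move=> v Vv; apply: contrapT => /negP nv; apply: Hall; by exists v.
    have C0 : cokermx A != 0.
      by rewrite -mxrank_eq0 mxrank_coker eA subn_eq0 -ltnNge.
    have [i [j Cij]] : exists i j, cokermx A i j != 0.
      apply: contrapT => Hn; move/negP: C0; apply; apply/eqP; apply/matrixP => i j.
      apply/eqP; apply: contrapT => H; apply: Hn; exists i, j; move/negP: H; by rewrite [X in _ == X]mxE.
    have w0 : (col j (cokermx A))^T != 0.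
      apply/negP => /eqP/matrixP/(_ 0 i) H.
      move/negP: Cij; apply; apply/eqP; move: H; rewrite !mxE => ->.
      by [].
    have [u [Vu du]] := HV _ w0.
    have := allA u Vu; rewrite submxE => /eqP /matrixP /(_ 0 j) H.
    move/negP: du; apply; apply/eqP; move: H; rewrite /dotv !mxE => E; rewrite -[X in _ = X]E.
    by apply: eq_bigr => l _; rewrite !mxE.
  exists (1 + n)%N, (col_mx v A); split.
    move=> i; case: (split_ordP i) => l ->.
      rewrite rowKu; suff -> : row l v = v by []; by apply/rowP => b; rewrite mxE (ord1 l).
    by rewrite rowKd.
  rewrite -addsmxE -eA; apply: rank_ltmx.
  rewrite ltmxE addsmxSr /=; apply/negP => H; move/negP: nvA; apply.
  exact: submx_trans (addsmxSl v A) H.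
have [n [A [VA dA]]] := step d (leqnn d).
have fA : row_full A by rewrite /row_full eqn_leq rank_leq_col dA.
move=> y; exists n, (fun i => (y *m pinvmx A) 0 i), (fun i => row i A); split => //.
by rewrite -mulmx_sum_row mulmxKpV // submx_full.
Qed.

Theorem mainTheorem13 (R : realType) (d : nat)
  (mu nu : probability (Rd R d) R) (r : Rd R d -> Rd R d) (N : set (Rd R d)) :
  P2r mu -> P2r nu ->
  optimal_map mu nu r ->
  mu.-negligible N ->
  (forall x1 x2 : 'rV[R]_d, ~ N x1 -> ~ N x2 -> x1 <> x2 ->
     0 < dotv (r x1 - r x2) (x1 - x2)) ->
  continuous (r : 'rV[R]_d -> 'rV[R]_d) ->
  (exists U : set 'rV[R]_d, open U /\ U !=set0 /\ U `<=` msupp mu `\` N) ->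
  forall t : R, 0 <= t <= 1 ->
    exists mut : probability (Rd R d) R,
      pushes (interp r t : Rd R d -> Rd R d) mu mut /\ prob_frame mut.
Proof.
move=> [_ fmu] [_ fnu] [pr _] _ Hmono cr [U [oU [[x0 Ux0] UsN]]] t t01.
have mh := @interp_meas R d r t cr.
exists (distribution mu (mfun_Sub (mem_set mh))).
split; first by split.
split; first exact: (@smom R d mu nu r t mh t01 fmu fnu pr).
apply: span_of => w w0.
apply: contrapT => Hall.
have Hz : forall v, msupp (distribution mu (mfun_Sub (mem_set mh))) v -> dotv v w = 0.
  move=> v sv; apply/eqP; apply: contrapT => /negP nz; apply: Hall; by exists v.
have supp_map : forall x, msupp mu x ->
    msupp (distribution mu (mfun_Sub (mem_set mh))) (interp r t x).
  move=> x sx V oV Vx; rewrite /distribution /pushforward /=.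
  apply: sx => //; move/continuousP: (@interp_cont R d r t cr); exact.
have nU : nbhs x0 U by apply: open_nbhs_nbhs; split.
have cg : {for 0, continuous (fun s : R => x0 + s *: w)}.
  apply: continuousD; first exact: cst_continuous.
  by apply: continuousZr_tmp; exact: cvg_id.
have := cg U; rewrite /= scale0r addr0 => /(_ nU) /nbhs_ballP [e /= e0 He].
set δ := e / 2.
have δ0 : 0 < δ by rewrite divr_gt0.
have Ux2 : U (x0 + δ *: w).
  apply: He; rewrite -ball_normE /= sub0r normrN gtr0_norm //.
  by rewrite /δ ltr_pdivrMr // ltr_pMr // ltr1n.
have x20 : x0 + δ *: w != x0.
  by rewrite -subr_eq0 addrC addKr scaler_eq0 negb_or w0 andbT gt_eqF.
have [s2 n2] := UsN _ Ux2.
have [s0 n0] := UsN _ Ux0.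
have := @interp_mono R d r t _ _ t01 x20 (Hmono _ _ n2 n0 (elimN eqP x20)).
have -> : x0 + δ *: w - x0 = δ *: w by rewrite addrC addKr.
rewrite dotvZr dotvBl !Hz ?subrr ?mulr0 ?ltxx //; exact: supp_map.
Qed.
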